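(* Let $(\Omega,\mathcal A)$ be a Borel space, $(\Omega,X_\bullet)$ a Borel field of complete metric spaces, and $F_\bullet$ a subfield with $F_\omega$ closed in $X_\omega$ for every $\omega$. The following are equivalent: (i) $F_\bullet$ is a Borel subfield; (ii) $\omega\mapsto d_\omega(x_\omega,F_\omega)\in[0,\infty]$ is Borel for every $x_\bullet\in\mathcal L(\Omega,X_\bullet)$; (iii) $\omega\mapsto d_\omega(x_\omega,F_\omega)$ is Borel for every $x_\bullet$ in some fundamental family $\mathcal D$ of $\mathcal L(\Omega,X_\bullet)$. (Convention: $d(x,\emptyset)=\infty$.)
   Context: Borel field of metric spaces: $(X_\omega,d_\omega)_{\omega\in\Omega}$ metric spaces; a section is $x_\bullet=(x_\omega)$, $x_\omega\in X_\omega$. A Borel structure is a set $\mathcal L(\Omega,X_\bullet)$ of sections such that (a) $\omega\mapsto d_\omega(x_\omega,y_\omega)$ is Borel for all $x_\bullet,y_\bullet\in\mathcal L$; (b) any section $y_\bullet$ with $\omega\mapsto d_\omega(x_\omega,y_\omega)$ Borel for all $x_\bullet\in\mathcal L$ lies in $\mathcal L$; (c) there is a countable $\mathcal D=\{x^n_\bullet\}\subseteq\mathcal L$ (fundamental family) with $\{x^n_\omega\}_n$ dense in $X_\omega$ for all $\omega$. For Borel $\Omega'$, $\mathcal L(\Omega',X_\bullet)$ = restrictions to $\Omega'$ of Borel sections. A subfield is $A_\bullet=(A_\omega)$ with $A_\omega\subseteq X_\omega$ (possibly empty); it is Borel if $\Omega'=\{\omega:A_\omega\ne\emptyset\}\in\mathcal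 A$ and there are countably many $y^n_\bullet\in\mathcal L(\Omega',X_\bullet)$ with $y^n_\omega\in A_\omega$ and $A_\omega\subseteq\overline{\{y^n_\omega\}_n}$ for all $\omega\in\Omega'$. *)

(* Defs.v *)
From Stdlib Require Import Reals Lra Classical ClassicalEpsilon.
Open Scope R_scope.

Set Implicit Arguments.

Definition sigma_algebra (Omega : Type) (A : (Omega -> Prop) -> Prop) : Prop :=
  A (fun _ => True) /\
  (forall S, A S -> A (fun w => ~ S w)) /\
  (forall S : nat -> Omega -> Prop, (forall n, A (S n)) -> A (fun w => exists n, S n w)).

Definition borel_of (T : Type) (opens : (T -> Prop) -> Prop) (B : T -> Prop) : Prop :=
  forall S : (T -> Prop) -> Prop, sigma_algebra S -> (forall U, opens U -> S U) -> S B.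

Definition measurable_wrt (Omega T : Type) (A : (Omega -> Prop) -> Prop)
  (opens : (T -> Prop) -> Prop) (f : Omega -> T) : Prop :=
  forall B, borel_of opens B -> A (fun w => B (f w)).

Definition R_open (U : R -> Prop) : Prop :=
  forall x, U x -> exists eps, 0 < eps /\ forall y, Rabs (y - x) < eps -> U y.

(** Extended reals with +infinity (values of distances lie in [0, +oo]). *)
Inductive ereal : Type := Fin (r : R) | PInf.

(** Order topology of (-oo, +oo]; restricted to [0,+oo] this is the usual topology. *)
Definition ereal_open (U : ereal -> Prop) : Prop :=
  (forall r, U (Fin r) -> exists eps, 0 < eps /\ forall s, Rabs (s - r) < eps -> U (Fin s)) /\
  (U PInf -> exists M, forall s, M < s -> U (Fin s)).

Definition measurable_R Omega (A : (Omega -> Prop) -> Prop) (f : Omega -> R) :=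
  measurable_wrt A R_open f.
Definition measurable_ereal Omega (A : (Omega -> Prop) -> Prop) (f : Omega -> ereal) :=
  measurable_wrt A ereal_open f.

Definition is_metric (X : Type) (d : X -> X -> R) : Prop :=
  (forall x y, d x y = 0 <-> x = y) /\
  (forall x y, d x y = d y x) /\
  (forall x y z, d x z <= d x y + d y z).

Definition complete_metric (X : Type) (d : X -> X -> R) : Prop :=
  forall u : nat -> X,
    (forall eps, 0 < eps -> exists N, forall m n, (N <= m)%nat -> (N <= n)%nat -> d (u m) (u n) < eps) ->
    exists l, forall eps, 0 < eps -> exists N, forall n, (N <= n)%nat -> d (u n) l < eps.

Definition closed_in (X : Type) (d : X -> X -> R) (F : X -> Prop) : Prop :=
  forall a, (forall eps, 0 < eps -> exists y, F y /\ d a y < eps) -> F a.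

Definition is_glb (E : R -> Prop) (m : R) : Prop :=
  (forall x, E x -> m <= x) /\ (forall b, (forall x, E x -> b <= x) -> b <= m).

Definition edist_set (X : Type) (d : X -> X -> R) (x : X) (F : X -> Prop) : ereal :=
  epsilon (inhabits PInf)
    (fun e => ((~ exists y, F y) /\ e = PInf) \/
              ((exists y, F y) /\ exists r, e = Fin r /\ is_glb (fun t => exists y, F y /\ t = d x y) r)).

(** Countable set of sections (possibly empty): enumerated by nat -> option. *)
Definition countable_set (S : Type) (D : S -> Prop) : Prop :=
  exists f : nat -> option S, forall x, D x <-> exists n, f n = Some x.

Section Fields.
Context {Omega : Type} {X : Omega -> Type}.
Variable (d : forall w, X w -> X w -> R).
Arguments d : clear implicits.

Definition section : Type := forall w, X w.

Definition fundamental_family (L : section -> Prop) (D : section -> Prop) : Prop :=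
  countable_set D /\ (forall x, D x -> L x) /\
  (forall w (a : X w) eps, 0 < eps -> exists x, D x /\ d w a (x w) < eps).

Definition borel_structure (A : (Omega -> Prop) -> Prop) (L : section -> Prop) : Prop :=
  (forall x y, L x -> L y -> measurable_R A (fun w => d w (x w) (y w))) /\
  (forall y : section, (forall x, L x -> measurable_R A (fun w => d w (x w) (y w))) -> L y) /\
  (exists D, fundamental_family L D).

(** A subfield A_w is Borel: Omega' = {w | A_w nonempty} is measurable and there are
    countably many (restrictions to Omega' of) Borel sections y^n with y^n_w in A_w and
    A_w contained in the closure of {y^n_w} for w in Omega'. *)
Definition borel_subfield (A : (Omega -> Prop) -> Prop) (L : section -> Prop)
  (F : forall w, X w -> Prop) : Prop :=
  let Omega' := fun w => exists a, F w a in
  A Omega' /\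
  exists y : nat -> option section,
    (forall n z, y n = Some z -> L z) /\
    (forall w, Omega' w ->
       (forall n z, y n = Some z -> F w (z w)) /\
       (forall a, F w a -> forall eps, 0 < eps ->
          exists n z, y n = Some z /\ d w a (z w) < eps)).
End Fields.
Arguments section {Omega} X.

(* Main.v *)
Require Import Defs.
From Stdlib Require Cantor.
From Stdlib Require Import ZArith Reals Lra Lia Classical ClassicalEpsilon FunctionalExtensionality PropExtensionality.
Open Scope R_scope.
Set Implicit Arguments.
Unset Strict Implicit.

Lemma A_ext {Omega} (A : (Omega -> Prop) -> Prop) (S S' : Omega -> Prop) :
  A S -> (forall w, S w <-> S' w) -> A S'.
Proof.
  intros H E. replace S' with S; auto.
  apply functional_extensionality; intro w; apply propositional_extensionality; auto.
Qed.

Lemma A_True {Omega} (A : (Omega -> Prop) -> Prop) : sigma_algebra A -> A (fun _ => True).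
Proof. intros [h _]; exact h. Qed.

Lemma A_not {Omega} (A : (Omega -> Prop) -> Prop) S : sigma_algebra A -> A S -> A (fun w => ~ S w).
Proof. intros [_ [h _]] HS; auto. Qed.

Lemma A_False {Omega} (A : (Omega -> Prop) -> Prop) : sigma_algebra A -> A (fun _ => False).
Proof. intros hA. eapply A_ext. apply (A_not hA (A_True hA)). simpl; tauto. Qed.

Lemma A_ex {Omega} (A : (Omega -> Prop) -> Prop) (S : nat -> Omega -> Prop) :
  sigma_algebra A -> (forall n, A (S n)) -> A (fun w => exists n, S n w).
Proof. intros [_ [_ h]] HS; auto. Qed.

Lemma A_or {Omega} (A : (Omega -> Prop) -> Prop) S T :
  sigma_algebra A -> A S -> A T -> A (fun w => S w \/ T w).
Proof.
  intros hA HS HT.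
  eapply A_ext. apply (A_ex (S:=fun n => match n with O => S | _ => T end) hA).
  intros [|n]; auto.
  intro w; split.
  - intros [[|n] H]; auto.
  - intros [H|H]; [exists O | exists 1%nat]; auto.
Qed.

Lemma A_and {Omega} (A : (Omega -> Prop) -> Prop) S T :
  sigma_algebra A -> A S -> A T -> A (fun w => S w /\ T w).
Proof.
  intros hA HS HT.
  eapply A_ext. apply (A_not hA (A_or hA (A_not hA HS) (A_not hA HT))).
  intro w; simpl; tauto.
Qed.

Lemma A_all {Omega} (A : (Omega -> Prop) -> Prop) (S : nat -> Omega -> Prop) :
  sigma_algebra A -> (forall n, A (S n)) -> A (fun w => forall n, S n w).
Proof.
  intros hA HS.
  eapply A_ext. apply (A_not hA (A_ex (S:=fun n => fun w => ~ S n w) hA (fun n => A_not hA (HS n)))).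
  intro w; simpl; split.
  - intros H n. apply NNPP. intro H'. apply H; eauto.
  - intros H [n Hn]; auto.
Qed.

Lemma A_impl_const {Omega} (A : (Omega -> Prop) -> Prop) (P : Prop) S :
  sigma_algebra A -> A S -> A (fun w => P -> S w).
Proof.
  intros hA HS. destruct (classic P) as [p|np].
  - eapply A_ext; [exact HS|]. simpl; tauto.
  - eapply A_ext; [exact (A_True hA)|]. simpl; tauto.
Qed.

Lemma A_and_const {Omega} (A : (Omega -> Prop) -> Prop) (P : Prop) S :
  sigma_algebra A -> A S -> A (fun w => P /\ S w).
Proof.
  intros hA HS. destruct (classic P) as [p|np].
  - eapply A_ext; [exact HS|]. simpl; tauto.
  - eapply A_ext; [exact (A_False hA)|]. simpl; tauto.
Qed.

Lemma meas_of_opens {Omega T} (A : (Omega -> Prop) -> Prop) (opens : (T -> Prop) -> Prop) f :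
  sigma_algebra A -> (forall U, opens U -> A (fun w => U (f w))) -> measurable_wrt A opens f.
Proof.
  intros hA HU B HB. apply (HB (fun B => A (fun w => B (f w)))); [|exact HU].
  destruct hA as [h1 [h2 h3]]. split; [|split]; [exact h1| |].
  - intros S HS. exact (h2 _ HS).
  - intros S HS. exact (h3 (fun n w => S n (f w)) HS).
Qed.

Lemma open_borel {T} (opens : (T -> Prop) -> Prop) U : opens U -> borel_of opens U.
Proof. intros HU S _ H; auto. Qed.
Unset Implicit Arguments.

Lemma small_inv (e : R) : 0 < e -> exists p : nat, / INR (S p) < e.
Proof.
  intros He. destruct (archimed_cor1 e He) as [N [HN HN0]].
  exists (pred N). replace (S (pred N)) with N by lia. exact HN.
Qed.

Lemma inv_pos (p : nat) : 0 < / INR (S p).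
Proof. apply Rinv_0_lt_compat. apply lt_0_INR. lia. Qed.

Lemma IZR_nat (z : Z) : exists k : nat, IZR z = INR k \/ IZR z = - INR k.
Proof.
  exists (Z.abs_nat z). rewrite INR_IZR_INZ, Zabs2Nat.id_abs.
  destruct (Z.abs_spec z) as [[_ H]|[_ H]]; rewrite H; [left; reflexivity| right; rewrite opp_IZR; ring].
Qed.

Definition cen (m k : nat) (b : bool) : R :=
  if b then INR k / INR (S m) else - INR k / INR (S m).

Lemma grid (U : R -> Prop) y eps : 0 < eps -> (forall t, Rabs (t - y) < eps -> U t) ->
  exists m k b, (forall t, Rabs (t - cen m k b) < / INR (S m) -> U t) /\ Rabs (y - cen m k b) < / INR (S m).
Proof.
  intros He HU.
  destruct (small_inv (eps/2)) as [m Hm]; [lra|].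
  set (N := INR (S m)) in *. set (r := / N) in *.
  assert (HN : 0 < N) by (apply lt_0_INR; lia).
  assert (Hr : N * r = 1) by (unfold r; field; lra).
  assert (Hr0 : 0 < r) by (unfold r; apply Rinv_0_lt_compat; lra).
  destruct (archimed (y * N)) as [H1 H2].
  set (z := (up (y * N) - 1)%Z).
  assert (Hz1 : IZR z <= y * N) by (unfold z; rewrite minus_IZR; simpl; lra).
  assert (Hz2 : y * N < IZR z + 1) by (unfold z; rewrite minus_IZR; simpl; lra).
  assert (E : y - IZR z * r = (y * N - IZR z) * r)
    by (transitivity (y * (N * r) - IZR z * r); [rewrite Hr; ring | ring]).
  assert (Hc : 0 <= y - IZR z * r < r).
  { rewrite E. split; [apply Rmult_le_pos; lra|].
    rewrite <- (Rmult_1_l r) at 2. apply Rmult_lt_compat_r; lra. }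
  destruct (IZR_nat z) as [k Hk].
  assert (Hcen : exists b, cen m k b = IZR z * r).
  { destruct Hk as [Hk|Hk]; [exists true | exists false]; unfold cen; fold N; rewrite Hk; unfold r, Rdiv; ring. }
  destruct Hcen as [b Hb]. exists m, k, b. rewrite Hb. change (/ INR (S m)) with r. split.
  - intros t Ht. apply HU. apply Rabs_def2 in Ht. apply Rabs_def1; lra.
  - apply Rabs_def1; lra.
Qed.

Definition lt_e (a b : ereal) : Prop :=
  match a, b with
  | Fin x, Fin y => x < y
  | Fin _, PInf => True
  | PInf, _ => False
  end.

Lemma R_ray_gt (c y : R) : c < y <-> exists p, ~ (y < c + / INR (S p)).
Proof.
  split.
  - intros H. destruct (small_inv (y - c)) as [p Hp]; [lra|]. exists p. lra.
  - intros [p Hp]. pose proof (inv_pos p). lra.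
Qed.

Lemma E_ray_gt (c : R) (v : ereal) : lt_e (Fin c) v <-> exists p, ~ lt_e v (Fin (c + / INR (S p))).
Proof.
  destruct v as [y|]; simpl.
  - apply R_ray_gt.
  - split; auto. intros _; exists O; auto.
Qed.

Lemma meas_R_crit {Omega} (A : (Omega -> Prop) -> Prop) (f : Omega -> R) :
  sigma_algebra A -> (forall c, A (fun w => f w < c)) -> measurable_R A f.
Proof.
  intros hA Hc.
  assert (Hg : forall c, A (fun w => c < f w)).
  { intro c. eapply A_ext.
    - apply (A_ex (S := fun p w => ~ (f w < c + / INR (S p))) hA). intro p. apply A_not; auto.
    - intro w. rewrite R_ray_gt. tauto. }
  apply meas_of_opens; auto. intros U HU.
  eapply A_ext.
  - apply (A_ex (S := fun m w => exists k b, (forall t, Rabs (t - cen m k b) < / INR (S m) -> U t) /\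
                  (f w < cen m k b + / INR (S m) /\ cen m k b - / INR (S m) < f w)) hA).
    intro m. apply (A_ex (S := fun k w => exists b, _) hA). intro k.
    eapply A_ext.
    + apply (A_or (S := fun w => (forall t, Rabs (t - cen m k true) < / INR (S m) -> U t) /\
                  (f w < cen m k true + / INR (S m) /\ cen m k true - / INR (S m) < f w))
                  (T := fun w => (forall t, Rabs (t - cen m k false) < / INR (S m) -> U t) /\
                  (f w < cen m k false + / INR (S m) /\ cen m k false - / INR (S m) < f w)) hA);
      apply A_and_const; auto; apply A_and; auto.
    + intro w; split; [intros [H|H]; eauto|]. intros [[|] H]; auto.
  - intro w. split.
    + intros [m [k [b [H1 H2]]]]. apply H1. apply Rabs_def1; lra.
    + intros Hw. destruct (HU _ Hw) as [eps [He HB]].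
      destruct (grid U (f w) eps He HB) as [m [k [b [H1 H2]]]].
      apply Rabs_def2 in H2. exists m, k, b. split; auto; lra.
Qed.

Lemma meas_E_crit {Omega} (A : (Omega -> Prop) -> Prop) (f : Omega -> ereal) :
  sigma_algebra A -> (forall c, A (fun w => lt_e (f w) (Fin c))) -> measurable_ereal A f.
Proof.
  intros hA Hc.
  assert (Hg : forall c, A (fun w => lt_e (Fin c) (f w))).
  { intro c. eapply A_ext.
    - apply (A_ex (S := fun p w => ~ lt_e (f w) (Fin (c + / INR (S p)))) hA). intro p. apply A_not; auto.
    - intro w. rewrite E_ray_gt. tauto. }
  apply meas_of_opens; auto. intros U [HUf HUi].
  eapply A_ext.
  - apply (A_or hA (S := fun w => exists m k b, (forall t, Rabs (t - cen m k b) < / INR (S m) -> U (Fin t)) /\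
                  (lt_e (f w) (Fin (cen m k b + / INR (S m))) /\ lt_e (Fin (cen m k b - / INR (S m))) (f w)))
                (T := fun w => exists N : nat, ((forall s, INR N < s -> U (Fin s)) /\ U PInf) /\ lt_e (Fin (INR N)) (f w))).
    + apply (A_ex (S := fun m w => exists k b, _) hA). intro m. apply (A_ex (S := fun k w => exists b, _) hA). intro k.
      eapply A_ext.
      * apply (A_or (S := fun w => (forall t, Rabs (t - cen m k true) < / INR (S m) -> U (Fin t)) /\
                  (lt_e (f w) (Fin (cen m k true + / INR (S m))) /\ lt_e (Fin (cen m k true - / INR (S m))) (f w)))
                  (T := fun w => (forall t, Rabs (t - cen m k false) < / INR (S m) -> U (Fin t)) /\
                  (lt_e (f w) (Fin (cen m k false + / INR (S m))) /\ lt_e (Fin (cen m k false - / INR (S m))) (f w))) hA);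
        apply A_and_const; auto; apply A_and; auto.
      * intro w; split; [intros [H|H]; eauto|]. intros [[|] H]; auto.
    + apply (A_ex (S := fun N w => _) hA). intro N. apply A_and_const; auto.
  - intro w. split.
    + intros [[m [k [b [H1 [H2 H3]]]]] | [N [[H1 H2] H3]]].
      * destruct (f w) as [s|]; simpl in *; [|contradiction]. apply H1. apply Rabs_def1; lra.
      * destruct (f w) as [s|]; simpl in *; auto.
    + intros Hw. destruct (f w) as [s|] eqn:E.
      * left. destruct (HUf _ Hw) as [eps [He HB]].
        destruct (grid (fun t => U (Fin t)) s eps He HB) as [m [k [b [H1 H2]]]].
        apply Rabs_def2 in H2. exists m, k, b. cbn [lt_e]. split; auto; lra.
      * right. destruct (HUi Hw) as [M HM]. destruct (INR_unbounded M) as [N HN].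
        exists N. simpl. split; auto. split; auto. intros s Hs. apply HM. lra.
Qed.

Lemma meas_R_lt {Omega} (A : (Omega -> Prop) -> Prop) (f : Omega -> R) c :
  measurable_R A f -> A (fun w => f w < c).
Proof.
  intros H. apply (H (fun r => r < c)). apply open_borel.
  intros x Hx. exists (c - x). split; [lra|]. intros y Hy. apply Rabs_def2 in Hy. lra.
Qed.

Lemma meas_E_lt {Omega} (A : (Omega -> Prop) -> Prop) (f : Omega -> ereal) c :
  measurable_ereal A f -> A (fun w => lt_e (f w) (Fin c)).
Proof.
  intros H. apply (H (fun r => lt_e r (Fin c))). apply open_borel.
  split.
  - intros x Hx. simpl in Hx. exists (c - x). split; [lra|]. intros y Hy. apply Rabs_def2 in Hy. simpl; lra.
  - simpl; tauto.
Qed.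

Lemma meas_R_lim {Omega} (A : (Omega -> Prop) -> Prop) (g : nat -> Omega -> R) (h : Omega -> R) :
  sigma_algebra A -> (forall j, measurable_R A (g j)) ->
  (forall w eps, 0 < eps -> exists N, forall n, (N <= n)%nat -> Rabs (g n w - h w) < eps) ->
  measurable_R A h.
Proof.
  intros hA Hg Hl. apply meas_R_crit; auto. intro c.
  eapply A_ext.
  - apply (A_ex (S := fun p w => exists N, forall i, g (N + i)%nat w < c - / INR (S p)) hA). intro p.
    apply (A_ex (S := fun N w => forall i, g (N + i)%nat w < c - / INR (S p)) hA). intro N.
    apply (A_all (S := fun i w => g (N + i)%nat w < c - / INR (S p)) hA). intro i.
    apply meas_R_lt; auto.
  - intro w. split.
    + intros [p [N HN]]. pose proof (inv_pos p).
      destruct (Hl w (/ INR (S p)) H) as [N' HN'].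
      specialize (HN N'). specialize (HN' (N + N')%nat ltac:(lia)). apply Rabs_def2 in HN'. lra.
    + intros Hw. destruct (small_inv ((c - h w) / 2)) as [p Hp]; [lra|].
      pose proof (inv_pos p).
      destruct (Hl w (/ INR (S p)) H) as [N HN]. exists p, N. intro i.
      specialize (HN (N + i)%nat ltac:(lia)). apply Rabs_def2 in HN. lra.
Qed.

Definition leastn (P : nat -> Prop) : nat :=
  epsilon (inhabits 0%nat) (fun n => P n /\ forall m, (m < n)%nat -> ~ P m).

Lemma least_exists (P : nat -> Prop) : (exists n, P n) -> exists n, P n /\ forall m, (m < n)%nat -> ~ P m.
Proof.
  intros [n Hn]. revert Hn. induction n as [n IH] using (well_founded_induction Wf_nat.lt_wf).
  intros Hn. destruct (classic (exists m, (m < n)%nat /\ P m)) as [[m [Hm HPm]]|H].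
  - exact (IH m Hm HPm).
  - exists n. split; auto. intros m Hm HPm. apply H; eauto.
Qed.

Lemma leastn_spec (P : nat -> Prop) : (exists n, P n) ->
  P (leastn P) /\ forall m, (m < leastn P)%nat -> ~ P m.
Proof. intros H. unfold leastn. apply epsilon_spec. apply least_exists; auto. Qed.

Definition pick {Omega} {X : Omega -> Type} (xs : nat -> section X) (P : nat -> Omega -> Prop) (fb : section X) : section X :=
  fun w => match excluded_middle_informative (exists n, P n w) with
           | left _ => xs (leastn (fun n => P n w)) w
           | right _ => fb w end.

Lemma pick_spec {Omega} {X : Omega -> Type} (xs : nat -> section X) P fb w :
  (exists n, (P n w /\ forall m, (m < n)%nat -> ~ P m w) /\ pick xs P fb w = xs n w) \/
  ((~ exists n, P n w) /\ pick xs P fb w = fb w).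
Proof.
  unfold pick. destruct (excluded_middle_informative (exists n, P n w)) as [H|H].
  - left. exists (leastn (fun n => P n w)). split; auto. apply (leastn_spec (fun n => P n w) H).
  - right; auto.
Qed.

Lemma meas_pick {Omega T} {X : Omega -> Type} (A : (Omega -> Prop) -> Prop) (opens : (T -> Prop) -> Prop)
  (xs : nat -> section X) P fb (Phi : forall w, X w -> T) :
  sigma_algebra A -> (forall n, A (P n)) ->
  (forall n, measurable_wrt A opens (fun w => Phi w (xs n w))) ->
  measurable_wrt A opens (fun w => Phi w (fb w)) ->
  measurable_wrt A opens (fun w => Phi w (pick xs P fb w)).
Proof.
  intros hA HP Hx Hf B HB.
  eapply A_ext.
  - apply (A_or hA (S := fun w => exists n, (P n w /\ forall m, (m < n)%nat -> ~ P m w) /\ B (Phi w (xs n w)))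
                 (T := fun w => (~ exists n, P n w) /\ B (Phi w (fb w)))).
    + apply (A_ex (S := fun n w => (P n w /\ forall m, (m < n)%nat -> ~ P m w) /\ B (Phi w (xs n w))) hA).
      intro n. apply A_and; [exact hA| |exact (Hx n B HB)]. apply A_and; [exact hA|exact (HP n)|].
      apply (A_all (S := fun m w => (m < n)%nat -> ~ P m w) hA). intro m. apply A_impl_const; auto. apply A_not; auto.
    + apply A_and; [exact hA| |exact (Hf B HB)]. apply A_not; auto. apply (A_ex (S := P) hA); auto.
  - intro w. destruct (pick_spec xs P fb w) as [[n [[H1 H2] E]] | [H1 E]]; rewrite E.
    + split.
      * intros [[n' [[H1' H2'] HB']] | [H1' _]].
        -- assert (n = n') as <- ; auto.
           destruct (Nat.lt_trichotomy n n') as [h|[h|h]]; auto.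
           ++ exfalso; exact (H2' n h H1).
           ++ exfalso; exact (H2 n' h H1').
        -- exfalso; eauto.
      * intros HB'. left. eauto.
    + split.
      * intros [[n' [[H1' _] _]] | [_ HB']]; auto. exfalso; eauto.
      * intros HB'. right; auto.
Qed.

Lemma d_props {X} (d : X -> X -> R) : is_metric d ->
  (forall x, d x x = 0) /\ (forall x y, d x y = d y x) /\ (forall x y z, d x z <= d x y + d y z) /\
  (forall x y, 0 <= d x y).
Proof.
  intros [H1 [H2 H3]].
  assert (Hr : forall x, d x x = 0) by (intro x; apply H1; auto).
  repeat split; auto.
  intros x y. pose proof (H3 x y x). rewrite Hr, (H2 y x) in H. lra.
Qed.

Lemma glb_exists (E : R -> Prop) : (exists x, E x) -> (forall x, E x -> 0 <= x) -> exists m, is_glb E m.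
Proof.
  intros [x Hx] Hpos.
  destruct (completeness (fun t => E (- t))) as [m [Hm1 Hm2]].
  - exists 0. intros t Ht. specialize (Hpos _ Ht). lra.
  - exists (- x). rewrite Ropp_involutive. auto.
  - exists (- m). split.
    + intros y Hy. assert (- y <= m) by (apply Hm1; rewrite Ropp_involutive; auto). lra.
    + intros b Hb. assert (m <= - b).
      { apply Hm2. intros t Ht. specialize (Hb _ Ht). lra. } lra.
Qed.

Lemma edist_spec {X} (d : X -> X -> R) x F : is_metric d ->
  ((~ exists y, F y) /\ edist_set d x F = PInf) \/
  ((exists y, F y) /\ exists r, edist_set d x F = Fin r /\ is_glb (fun t => exists y, F y /\ t = d x y) r).
Proof.
  intros Hm. unfold edist_set. apply epsilon_spec.
  destruct (classic (exists y, F y)) as [[y Hy]|H].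
  - destruct (glb_exists (fun t => exists y, F y /\ t = d x y)) as [r Hr].
    + eauto.
    + intros t [z [_ ->]]. apply (d_props d Hm).
    + exists (Fin r). right. split; eauto.
  - exists PInf. left; auto.
Qed.

Lemma edist_lt {X} (d : X -> X -> R) x F c : is_metric d ->
  lt_e (edist_set d x F) (Fin c) <-> exists a, F a /\ d x a < c.
Proof.
  intros Hm. destruct (edist_spec d x F Hm) as [[H1 E] | [H1 [r [E [Hr1 Hr2]]]]]; rewrite E; simpl.
  - split; [tauto|]. intros [a [Ha _]]; eauto.
  - split.
    + intros Hrc. apply NNPP. intro Hn.
      assert (c <= r).
      { apply Hr2. intros t [y [Hy ->]]. apply Rnot_lt_le. intro. apply Hn; eauto. }
      lra.
    + intros [a [Ha Hd]]. assert (r <= d x a) by (apply Hr1; eauto). lra.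
Qed.

Lemma le_eps (a b : R) : (forall e, 0 < e -> a <= b + e) -> a <= b.
Proof. intros H. apply Rnot_lt_le. intro Hlt. specialize (H ((a - b) / 2) ltac:(lra)). lra. Qed.

Lemma half_pos (n : nat) : 0 < (/ 2) ^ n.
Proof. apply pow_lt. lra. Qed.

Lemma half_small (e : R) : 0 < e -> exists N, forall n, (N <= n)%nat -> (/ 2) ^ n < e.
Proof.
  intros He. destruct (pow_lt_1_zero (/ 2)) with (y := e) as [N HN]; auto.
  - rewrite Rabs_right; lra.
  - exists N. intros n Hn. specialize (HN n Hn). rewrite Rabs_right in HN; auto.
    apply Rle_ge, Rlt_le, half_pos.
Qed.

Definition stepP {Omega} {X : Omega -> Type} (d : forall w, X w -> X w -> R) (F : forall w, X w -> Prop)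
  (xs : nat -> section X) (l : nat) (s : section X) : nat -> Omega -> Prop :=
  fun n w => lt_e (edist_set (d w) (xs n w) (F w)) (Fin ((/ 2) ^ (S l))) /\ d w (xs n w) (s w) < 2 * (/ 2) ^ l.

Fixpoint chain {Omega} {X : Omega -> Type} (d : forall w, X w -> X w -> R) (F : forall w, X w -> Prop)
  (xs : nat -> section X) (s0 : section X) (m : nat) (j : nat) : section X :=
  match j with
  | O => s0
  | S j' => pick xs (stepP d F xs (m + j') (chain d F xs s0 m j')) (chain d F xs s0 m j')
  end.

Definition limsec {Omega} {X : Omega -> Type} (d : forall w, X w -> X w -> R) (ch : nat -> section X)
  (s0 : section X) : section X :=
  fun w => epsilon (inhabits (s0 w))
    (fun l => forall eps, 0 < eps -> exists N, forall n, (N <= n)%nat -> d w (ch n w) l < eps).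

Theorem mainTheorem5
  (Omega : Type) (A : (Omega -> Prop) -> Prop) (hA : sigma_algebra A)
  (X : Omega -> Type) (d : forall w, X w -> X w -> R)
  (hmet : forall w, is_metric (d w)) (hcomp : forall w, complete_metric (d w))
  (L : section X -> Prop) (hL : borel_structure d A L)
  (F : forall w, X w -> Prop) (hF : forall w, closed_in (d w) (F w)) :
  (borel_subfield d A L F <->
     (forall x : section X, L x -> measurable_ereal A (fun w => edist_set (d w) (x w) (F w)))) /\
  ((forall x : section X, L x -> measurable_ereal A (fun w => edist_set (d w) (x w) (F w))) <->
     (exists D, fundamental_family d L D /\
        forall x : section X, D x -> measurable_ereal A (fun w => edist_set (d w) (x w) (F w)))).
Proof.
  destruct hL as [La [Lb [D0 HD0]]].
  assert (dref : forall w x, d w x x = 0) by (intros w; apply (d_props _ (hmet w))).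
  assert (dsym : forall w x y, d w x y = d w y x) by (intros w; apply (d_props _ (hmet w))).
  assert (dtri : forall w x y z, d w x z <= d w x y + d w y z) by (intros w; apply (d_props _ (hmet w))).
  assert (dpos : forall w x y, 0 <= d w x y) by (intros w; apply (d_props _ (hmet w))).
  assert (I : borel_subfield d A L F ->
     forall x : section X, L x -> measurable_ereal A (fun w => edist_set (d w) (x w) (F w))).
  { intros [HO [y [Hy1 Hy2]]] x Lx. apply meas_E_crit; auto. intro c.
    eapply A_ext.
    - apply (A_and hA HO (T := fun w => exists n, match y n with Some z => d w (x w) (z w) < c | None => False end)). apply (A_ex (S := fun n w => match y n with Some z => d w (x w) (z w) < c | None => False end) hA).
      intro n. destruct (y n) as [z|] eqn:E.
      + apply meas_R_lt. apply La; eauto.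
      + apply A_False; auto.
    - intro w. rewrite edist_lt by apply hmet. split.
      + intros [Hw [n Hn]]. destruct (y n) as [z|] eqn:E; [|contradiction].
        exists (z w). split; auto. apply (proj1 (Hy2 w Hw) n z E).
      + intros [a [Ha Hd]]. assert (Hw : exists a, F w a) by eauto. split; auto.
        destruct (proj2 (Hy2 w Hw) a Ha (c - d w (x w) a) ltac:(lra)) as [n [z [E Hz]]].
        exists n. rewrite E. pose proof (dtri w (x w) a (z w)). lra. }
  assert (III : forall D, fundamental_family d L D ->
     (forall x : section X, D x -> measurable_ereal A (fun w => edist_set (d w) (x w) (F w))) ->
     borel_subfield d A L F).
  { intros D [[f Hf] [HDL HDd]] HDm.
    destruct (classic (exists x0, D x0)) as [[x0 Hx0]|HnD].
    2:{ assert (HO : forall w, ~ exists a, F w a).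
        { intros w [a Ha]. destruct (HDd w a 1 ltac:(lra)) as [x [Dx _]]. eauto. }
        split.
        - eapply A_ext; [apply (A_False hA)|]. intro w; split; [tauto|]. intro H; exact (HO w H).
        - exists (fun _ => None). split; [discriminate|]. intros w Hw. exfalso; exact (HO w Hw). }
    set (xs := fun n => match f n with Some z => z | None => x0 end).
    assert (Hxs : forall n, D (xs n)).
    { intro n. unfold xs. destruct (f n) as [z|] eqn:E; auto. apply Hf. eauto. }
    assert (HxsD : forall w a eps, 0 < eps -> exists n, d w a (xs n w) < eps).
    { intros w a eps He. destruct (HDd w a eps He) as [x [Dx Hx]].
      destruct (proj1 (Hf x) Dx) as [n En]. exists n. unfold xs. rewrite En. auto. }
    set (Good := fun s : section X => L s /\ measurable_ereal A (fun w => edist_set (d w) (s w) (F w))).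
    assert (Gxs : forall n, Good (xs n)) by (intro n; split; auto).
    assert (Gpick : forall P fb, (forall n, A (P n)) -> Good fb -> Good (pick xs P fb)).
    { intros P fb HP [Lfb Mfb]. split.
      - apply Lb. intros y Ly.
        apply (meas_pick A R_open xs P fb (fun w v => d w (y w) v));
          [exact hA | exact HP | intro n; apply La; [exact Ly | apply Gxs] | apply La; auto].
      - apply (meas_pick A ereal_open xs P fb (fun w v => edist_set (d w) v (F w)));
          [exact hA | exact HP | intro n; apply (Gxs n) | exact Mfb]. }
    assert (HAe : forall n c, A (fun w => lt_e (edist_set (d w) (xs n w) (F w)) (Fin c))).
    { intros n c. apply meas_E_lt. apply Gxs. }
    assert (HAd : forall s, L s -> forall n c, A (fun w => d w (xs n w) (s w) < c)).
    { intros s Ls n c. apply meas_R_lt. apply La; [apply Gxs | exact Ls]. }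
    set (Om := fun w => exists a, F w a).
    assert (c1 : forall s0 m, Good s0 -> forall j, Good (chain d F xs s0 m j)).
    { intros s0 m G0 j. induction j as [|j IH]; simpl; auto.
      apply Gpick; auto. intro n. unfold stepP. apply A_and; auto. apply HAd. apply IH. }
    assert (c2 : forall s0 m w j, d w (chain d F xs s0 m j w) (chain d F xs s0 m (S j) w) <= 2 * (/ 2) ^ (m + j)).
    { intros s0 m w j. simpl.
      destruct (pick_spec xs (stepP d F xs (m + j) (chain d F xs s0 m j)) (chain d F xs s0 m j) w)
        as [[n [[[_ H] _] E]] | [_ E]]; rewrite E.
      - rewrite dsym. lra.
      - rewrite dref. pose proof (half_pos (m + j)). lra. }
    assert (c3 : forall s0 m w j i, d w (chain d F xs s0 m j w) (chain d F xs s0 m (j + i) w)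
                    <= 4 * (/ 2) ^ (m + j) - 4 * (/ 2) ^ (m + j + i)).
    { intros s0 m w j i. induction i as [|i IH].
      - rewrite !Nat.add_0_r, dref. lra.
      - rewrite Nat.add_succ_r. pose proof (c2 s0 m w (j + i)%nat).
        pose proof (dtri w (chain d F xs s0 m j w) (chain d F xs s0 m (j + i) w) (chain d F xs s0 m (S (j + i)) w)).
        rewrite Nat.add_succ_r. simpl pow. rewrite Nat.add_assoc in H. lra. }
    assert (c4 : forall s0 m w, Om w -> lt_e (edist_set (d w) (s0 w) (F w)) (Fin ((/ 2) ^ m)) ->
                  forall j, lt_e (edist_set (d w) (chain d F xs s0 m j w) (F w)) (Fin ((/ 2) ^ (m + j)))).
    { intros s0 m w Hw H0 j. induction j as [|j IH].
      - rewrite Nat.add_0_r. exact H0.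
      - rewrite edist_lt in IH by apply hmet. destruct IH as [a [Ha Hda]].
        destruct (HxsD w a ((/ 2) ^ (S (m + j))) (half_pos _)) as [n Hn].
        assert (Hst : stepP d F xs (m + j) (chain d F xs s0 m j) n w).
        { split.
          - rewrite edist_lt by apply hmet. exists a. split; auto. rewrite dsym; auto.
          - pose proof (dtri w (xs n w) a (chain d F xs s0 m j w)). pose proof (dsym w (xs n w) a).
            pose proof (dsym w a (chain d F xs s0 m j w)). simpl pow in Hn. pose proof (half_pos (m + j)). lra. }
        simpl.
        destruct (pick_spec xs (stepP d F xs (m + j) (chain d F xs s0 m j)) (chain d F xs s0 m j) w)
          as [[n' [[[H _] _] E]] | [Hn' _]].
        + rewrite E. rewrite Nat.add_succ_r. exact H.
        + exfalso; eauto. }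
    assert (c5 : forall s0 m w eps, 0 < eps -> exists N, forall n, (N <= n)%nat ->
                   d w (chain d F xs s0 m n w) (limsec d (chain d F xs s0 m) s0 w) < eps).
    { intros s0 m w. unfold limsec. apply epsilon_spec. apply hcomp.
      intros eps He. destruct (half_small (eps / 4)) as [N HN]; [lra|].
      exists N. intros p q Hp Hq.
      assert (Hgen : forall p q, (N <= p)%nat -> (p <= q)%nat -> d w (chain d F xs s0 m p w) (chain d F xs s0 m q w) < eps).
      { intros p' q' Hp' Hpq. replace q' with (p' + (q' - p'))%nat by lia.
        pose proof (c3 s0 m w p' (q' - p')%nat). pose proof (half_pos (m + p' + (q' - p'))).
        specialize (HN (m + p')%nat ltac:(lia)). lra. }
      destruct (Nat.le_ge_cases p q) as [h|h].
      - apply Hgen; auto.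
      - rewrite dsym. apply Hgen; auto. }
    assert (c6 : forall s0 m, Good s0 -> L (limsec d (chain d F xs s0 m) s0)).
    { intros s0 m G0. apply Lb. intros y Ly.
      apply (meas_R_lim A (fun j w => d w (y w) (chain d F xs s0 m j w))); auto.
      - intro j. apply La; auto. apply (c1 s0 m G0 j).
      - intros w eps He. destruct (c5 s0 m w eps He) as [N HN]. exists N. intros n Hn.
        specialize (HN n Hn).
        pose proof (dtri w (y w) (chain d F xs s0 m n w) (limsec d (chain d F xs s0 m) s0 w)).
        pose proof (dtri w (y w) (limsec d (chain d F xs s0 m) s0 w) (chain d F xs s0 m n w)).
        rewrite (dsym w (limsec d (chain d F xs s0 m) s0 w)) in H0.
        apply Rabs_def1; lra. }
    assert (c7 : forall s0 m w, Om w -> lt_e (edist_set (d w) (s0 w) (F w)) (Fin ((/ 2) ^ m)) ->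
                   F w (limsec d (chain d F xs s0 m) s0 w)).
    { intros s0 m w Hw H0. apply hF. intros eps He.
      destruct (c5 s0 m w (eps / 2) ltac:(lra)) as [N1 HN1].
      destruct (half_small (eps / 2)) as [N2 HN2]; [lra|].
      pose proof (c4 s0 m w Hw H0 (N1 + N2)%nat) as H.
      rewrite edist_lt in H by apply hmet. destruct H as [a [Ha Hda]].
      exists a. split; auto.
      specialize (HN1 (N1 + N2)%nat ltac:(lia)). specialize (HN2 (m + (N1 + N2))%nat ltac:(lia)).
      pose proof (dtri w (limsec d (chain d F xs s0 m) s0 w) (chain d F xs s0 m (N1 + N2) w) a).
      pose proof (dsym w (limsec d (chain d F xs s0 m) s0 w) (chain d F xs s0 m (N1 + N2) w)). lra. }
    assert (c8 : forall s0 m w, d w (s0 w) (limsec d (chain d F xs s0 m) s0 w) <= 4 * (/ 2) ^ m).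
    { intros s0 m w. apply le_eps. intros e He.
      destruct (c5 s0 m w e He) as [N HN]. specialize (HN N (le_n N)).
      pose proof (c3 s0 m w 0%nat N) as H. simpl chain in H. rewrite Nat.add_0_r in H.
      pose proof (dtri w (s0 w) (chain d F xs s0 m N w) (limsec d (chain d F xs s0 m) s0 w)).
      pose proof (half_pos (m + N)). lra. }
    pose (C' := fun m n w => lt_e (edist_set (d w) (xs n w) (F w)) (Fin ((/ 2) ^ m))).
    pose (C := fun k m n w => C' m n w /\ d w (xs n w) (xs k w) < (/ 2) ^ m).
    pose (s0 := fun k m => pick xs (C k m) (pick xs (C' m) x0)).
    assert (G0 : forall k m, Good (s0 k m)).
    { intros k m. apply Gpick.
      - intro n. apply A_and; [exact hA | apply HAe | apply HAd; apply Gxs].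
      - apply Gpick; [intro n; apply HAe|]. split; auto. }
    assert (start : forall k m w, Om w -> lt_e (edist_set (d w) (s0 k m w) (F w)) (Fin ((/ 2) ^ m))).
    { intros k m w [a Ha]. unfold s0.
      destruct (pick_spec xs (C k m) (pick xs (C' m) x0) w) as [[n [[[H _] _] E]] | [_ E]]; rewrite E; [exact H|].
      destruct (pick_spec xs (C' m) x0 w) as [[n [[H _] E']] | [Hn E']]; rewrite E'; [exact H|].
      exfalso. destruct (HxsD w a ((/ 2) ^ m) (half_pos m)) as [n Hd]. apply Hn. exists n.
      unfold C'. rewrite edist_lt by apply hmet. exists a. split; auto. rewrite dsym; auto. }
    pose (zz := fun k m => limsec d (chain d F xs (s0 k m) m) (s0 k m)).
    split.
    - eapply A_ext.
      + apply (A_ex (S := fun n w => lt_e (edist_set (d w) (x0 w) (F w)) (Fin (INR n))) hA).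
        intro n. apply meas_E_lt. apply HDm; auto.
      + intro w. split.
        * intros [n H]. rewrite edist_lt in H by apply hmet. destruct H as [a [Ha _]]; eauto.
        * intros [a Ha]. destruct (INR_unbounded (d w (x0 w) a)) as [n Hn]. exists n.
          rewrite edist_lt by apply hmet. exists a. split; auto; lra.
    - exists (fun n => let (k, m) := Cantor.of_nat n in Some (zz k m)). split.
      + intros n z. destruct (Cantor.of_nat n) as [k m]. intros E; injection E; intros <-.
        apply c6. apply G0.
      + intros w Hw. split.
        * intros n z. destruct (Cantor.of_nat n) as [k m]. intros E; injection E; intros <-.
          apply c7; [exact Hw|]. apply start; exact Hw.
        * intros a Ha eps He. destruct (half_small (eps / 6)) as [m Hm]; [lra|]. specialize (Hm m (le_n m)).
          destruct (HxsD w a ((/ 2) ^ m) (half_pos m)) as [k Hk].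
          exists (Cantor.to_nat (k, m)), (zz k m). rewrite Cantor.cancel_of_to. split; [reflexivity|].
          assert (HC : C k m k w).
          { split.
            - unfold C'. rewrite edist_lt by apply hmet. exists a. split; auto. rewrite dsym; auto.
            - rewrite dref. apply half_pos. }
          destruct (pick_spec xs (C k m) (pick xs (C' m) x0) w) as [[n [[[_ Hn] _] E]] | [Hn E]].
          2:{ exfalso; eauto. }
          pose proof (c8 (s0 k m) m w) as H8. fold (zz k m) in H8.
          assert (Es : s0 k m w = xs n w) by exact E.
          rewrite Es in H8.
          pose proof (dtri w a (xs k w) (zz k m w)).
          pose proof (dtri w (xs k w) (xs n w) (zz k m w)).
          pose proof (dsym w (xs k w) (xs n w)). lra.
  }
  split.
  - split; [exact I|]. intros Hii. apply (III D0 HD0). intros x Dx. apply Hii. apply (proj1 (proj2 HD0)); auto.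
  - split.
    + intros Hii. exists D0. split; auto. intros x Dx. apply Hii. apply (proj1 (proj2 HD0)); auto.
    + intros [D [HD Hm]]. apply I. apply (III D HD Hm).
Qed.
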